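(* Let $p$ be a prime, $D$ the quaternion algebra over $\mathbb{Q}$ ramified exactly at $\{p,\infty\}$, $\mathcal{O}$ a maximal order, and $\lambda,\mu\in\mathcal{O}$ with $N(\lambda)=p-1$, $N(\mu)=p$, $\mathrm{tr}(r)=0$ where $r=\lambda\overline{\mu}$. Let $g=\begin{pmatrix}1&\lambda\\0&\mu\end{pmatrix}$, $A=g\overline{g}^T$, and for $\theta\in\mathbb{Q}$, $\theta>0$, let $W_\theta=\{\nu\in M_2(\mathcal{O})^\times:\nu A\overline{\nu}^T=\theta A\}$. Then $W_\theta$ consists exactly of the matrices $\nu=\begin{pmatrix}\alpha&\beta\\\gamma&\delta\end{pmatrix}\in M_2(\mathcal{O})^\times$ such that \[pN(p\alpha+\overline{r}\gamma)+N\big(p(\alpha r+p\beta)+\overline{r}(\gamma r+p\delta)\big)=\theta p^3,\] \[pN(\gamma)+N(\gamma r+p\delta)=\theta p^2,\] \[p\alpha\overline{\gamma}+(\alpha r+p\beta)\overline{(\gamma r+p\delta)}=-\theta p\,\overline{r}.\]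
   Context: $x\mapsto\overline{x}$ is quaternion conjugation, $N(x)=x\overline{x}$ the reduced norm, $\mathrm{tr}(x)=x+\overline{x}$ the reduced trace. For a matrix $M$ over $D$, $\overline{M}^T$ is the transpose of the entrywise conjugate. $M_2(\mathcal{O})^\times=\mathrm{GL}_2(D)\cap M_2(\mathcal{O})$. *)

(* Defs.v *)
From HB Require Import structures.
From mathcomp Require Import all_boot all_order all_algebra.
From mathcomp Require Import ring.
Set Implicit Arguments. Unset Strict Implicit. Unset Printing Implicit Defensive.
Import Order.TTheory GRing.Theory Num.Theory.
Local Open Scope ring_scope.

(* The quaternion algebra (a,b)_Q : Q-basis 1,i,j,k with i^2 = a, j^2 = b, k = ij = -ji. *)
Record quat (a b : rat) := Quat { q0 : rat; q1 : rat; q2 : rat; q3 : rat }.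
Arguments Quat {a b}.

Section QuatAlgebra.
Variables a b : rat.
Local Notation Q := (quat a b).

Definition quat_tup (x : Q) := (q0 x, q1 x, q2 x, q3 x).
Definition tup_quat (t : rat * rat * rat * rat) : Q :=
  let: (x0, x1, x2, x3) := t in Quat x0 x1 x2 x3.
Lemma quat_tupK : cancel quat_tup tup_quat. Proof. by case. Qed.
HB.instance Definition _ := Choice.copy Q (can_type quat_tupK).

Definition qadd (x y : Q) : Q :=
  Quat (q0 x + q0 y) (q1 x + q1 y) (q2 x + q2 y) (q3 x + q3 y).
Definition qopp (x : Q) : Q := Quat (- q0 x) (- q1 x) (- q2 x) (- q3 x).
Definition qzero : Q := Quat 0 0 0 0.
Definition qone : Q := Quat 1 0 0 0.
Definition qmul (x y : Q) : Q :=
  Quat (q0 x * q0 y + a * q1 x * q1 y + b * q2 x * q2 y - a * b * q3 x * q3 y)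
       (q0 x * q1 y + q1 x * q0 y - b * q2 x * q3 y + b * q3 x * q2 y)
       (q0 x * q2 y + q2 x * q0 y + a * q1 x * q3 y - a * q3 x * q1 y)
       (q0 x * q3 y + q3 x * q0 y + q1 x * q2 y - q2 x * q1 y).

Lemma qeq (x y : Q) : q0 x = q0 y -> q1 x = q1 y -> q2 x = q2 y -> q3 x = q3 y -> x = y.
Proof. by case: x => ????; case: y => ???? /= -> -> -> ->. Qed.

Lemma qaddA : associative qadd.
Proof. by move=> x y z; apply: qeq; rewrite /= addrA. Qed.
Lemma qaddC : commutative qadd.
Proof. by move=> x y; apply: qeq; rewrite /= addrC. Qed.
Lemma qadd0 : left_id qzero qadd.
Proof. by move=> x; apply: qeq; rewrite /= add0r. Qed.
Lemma qaddN : left_inverse qzero qopp qadd.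
Proof. by move=> x; apply: qeq; rewrite /= addNr. Qed.
HB.instance Definition _ := GRing.isZmodule.Build Q qaddA qaddC qadd0 qaddN.

Lemma qmulA : associative qmul.
Proof. by move=> x y z; apply: qeq; rewrite /=; ring. Qed.
Lemma qmul1 : left_id qone qmul.
Proof. by move=> x; apply: qeq; rewrite /=; ring. Qed.
Lemma qmulr1 : right_id qone qmul.
Proof. by move=> x; apply: qeq; rewrite /=; ring. Qed.
Lemma qmulDl : left_distributive qmul qadd.
Proof. by move=> x y z; apply: qeq; rewrite /=; ring. Qed.
Lemma qmulDr : right_distributive qmul qadd.
Proof. by move=> x y z; apply: qeq; rewrite /=; ring. Qed.
Lemma qone_neq0 : qone != qzero.
Proof. by apply/eqP => /(congr1 (@q0 a b)) /= /eqP; rewrite oner_eq0. Qed.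
HB.instance Definition _ :=
  GRing.Zmodule_isNzRing.Build Q qmulA qmul1 qmulr1 qmulDl qmulDr qone_neq0.

Definition qconj (x : Q) : Q := Quat (q0 x) (- q1 x) (- q2 x) (- q3 x).
Definition qnorm (x : Q) : Q := x * qconj x.
Definition qtr (x : Q) : Q := x + qconj x.
Definition qrat (c : rat) : Q := Quat c 0 0 0.

Definition qcoords (x : Q) : 'rV[rat]_4 :=
  \row_(i < 4) [:: q0 x; q1 x; q2 x; q3 x]`_i.

Definition is_lattice (O : Q -> Prop) : Prop :=
  exists e : 'I_4 -> Q,
    \det (\matrix_(i < 4) qcoords (e i)) != 0 /\
    forall x, O x <-> exists n : 'I_4 -> int, x = \sum_(i < 4) (n i)%:~R * e i.

Definition is_order (O : Q -> Prop) : Prop :=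
  [/\ O 1, (forall x y, O x -> O y -> O (x * y)) & is_lattice O].

Definition is_maximal_order (O : Q -> Prop) : Prop :=
  is_order O /\ forall O' : Q -> Prop, is_order O' -> (forall x, O x -> O' x) ->
                                        forall x, O' x -> O x.

Definition mx2 (x y z w : Q) : 'M[Q]_2 :=
  \matrix_(i < 2, j < 2)
    if i == ord0 then (if j == ord0 then x else y) else (if j == ord0 then z else w).

Definition conjT (M : 'M[Q]_2) : 'M[Q]_2 := (map_mx qconj M)^T.

(* M_2(O)^x = GL_2(D) \cap M_2(O) *)
Definition in_GL2 (M : 'M[Q]_2) : Prop :=
  exists M' : 'M[Q]_2, M *m M' = 1%:M /\ M' *m M = 1%:M.
Definition in_M2O_units (O : Q -> Prop) (M : 'M[Q]_2) : Prop :=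
  in_GL2 M /\ forall i j, O (M i j).

End QuatAlgebra.

(* At infinity: ramified iff a < 0 and b < 0.
   At a prime l: ramified iff z^2 = a x^2 + b y^2 has no nontrivial solution in Q_l,
   i.e. iff for some n there is no primitive integer solution of the congruence
   z^2 - a x^2 - b y^2 = 0 mod l^n (l-adic compactness). *)
Definition ramified_infty (a b : int) : Prop := a < 0 /\ b < 0.

Definition ramified_at (a b : int) (l : nat) : Prop :=
  ~ (forall n : nat, exists x y z : int,
        ~~ [&& (l%:Z %| x)%Z, (l%:Z %| y)%Z & (l%:Z %| z)%Z] /\
        ((l ^ n)%:Z %| z ^+ 2 - a * x ^+ 2 - b * y ^+ 2)%Z).

Definition ramified_exactly_p_infty (a b : int) (p : nat) : Prop :=
  a != 0 /\ b != 0 /\ ramified_infty a b /\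
  forall l : nat, prime l -> (ramified_at a b l <-> l = p).

(* Main.v *)
Require Import Defs.
From HB Require Import structures.
From mathcomp Require Import all_boot all_order all_algebra ring lra.
Import Order.TTheory GRing.Theory Num.Theory.
Local Open Scope ring_scope.

Section Core.
Variables a b : rat.
Local Notation Q := (quat a b).

Lemma qcanc (c : rat) (x : Q) : c != 0 -> qrat a b c * x = 0 -> x = 0.
Proof.
move=> hc /(congr1 (fun y => (q0 y, q1 y, q2 y, q3 y))) /= [h0 h1 h2 h3].
have E : forall t : rat, c * t = 0 -> t = 0.
  by move=> t /eqP; rewrite mulf_eq0 (negbTE hc) => /eqP.
apply: qeq => /=; apply: E.
- by rewrite -h0; ring.
- by rewrite -h1; ring.
- by rewrite -h2; ring.
- by rewrite -h3; ring.
Qed.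

Lemma I1 (pr th : rat) (r al be ga de : Q) : q0 r = 0 ->
  let P := qrat a b pr in let T := qrat a b th in
  let K := r * qconj r - qrat a b (pr^+2 - pr) in
  let E00 := (al*P + be*qconj r)*qconj al + (al*r + be*P)*qconj be in
  let E01 := (al*P + be*qconj r)*qconj ga + (al*r + be*P)*qconj de in
  let E10 := (ga*P + de*qconj r)*qconj al + (ga*r + de*P)*qconj be in
  let E11 := (ga*P + de*qconj r)*qconj ga + (ga*r + de*P)*qconj de in
  P * qnorm (P*al + qconj r * ga) + qnorm (P*(al*r + P*be) + qconj r*(ga*r+P*de))
   - T*(P*(P*P)) =
  P*P*P*(E00 - T*P) + P*P*(E01 - T*r)*r + P*P*qconj r*(E10 - T*qconj r)
  + P*qconj r*(E11 - T*P)*r + P*P*al*K*qconj al + P*al*K*qconj ga*r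
  + P*qconj r*ga*K*qconj al + qconj r*ga*K*qconj ga*r - T*P*P*K.
Proof.
case: r => r0 r1 r2 r3 /= ->.
rewrite /qnorm.
apply: qeq => /=; ring.
Qed.

Lemma I2 (pr th : rat) (r al be ga de : Q) :
  let P := qrat a b pr in let T := qrat a b th in
  let K := r * qconj r - qrat a b (pr^+2 - pr) in
  let E11 := (ga*P + de*qconj r)*qconj ga + (ga*r + de*P)*qconj de in
  P * qnorm ga + qnorm (ga * r + P * de) - T*(P*P) = P*(E11 - T*P) + ga*K*qconj ga.
Proof. rewrite /qnorm /=; apply: qeq => /=; ring. Qed.

Lemma I3 (pr th : rat) (r al be ga de : Q) : q0 r = 0 ->
  let P := qrat a b pr in let T := qrat a b th in
  let K := r * qconj r - qrat a b (pr^+2 - pr) in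
  let E01 := (al*P + be*qconj r)*qconj ga + (al*r + be*P)*qconj de in
  P * al * qconj ga + (al * r + P * be) * qconj (ga * r + P * de) + T*P*qconj r
   = P*(E01 - T*r) + al*K*qconj ga.
Proof. case: r => r0 r1 r2 r3 /= ->; apply: qeq => /=; ring. Qed.

Lemma I4 (pr th : rat) (r al be ga de : Q) :
  let P := qrat a b pr in let T := qrat a b th in
  let E01 := (al*P + be*qconj r)*qconj ga + (al*r + be*P)*qconj de in
  let E10 := (ga*P + de*qconj r)*qconj al + (ga*r + de*P)*qconj be in
  E10 - T*qconj r = qconj (E01 - T*r).
Proof. apply: qeq => /=; ring. Qed.

End Core.


Section Core.
Variables a b : rat.
Local Notation Q := (quat a b).
Lemma qconj0 : qconj (0 : Q) = 0.
Proof. by apply: qeq => /=; rewrite ?oppr0. Qed.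

Lemma core (pr th : rat) (r al be ga de : Q) :
  pr != 0 -> q0 r = 0 -> r * qconj r = qrat a b (pr^+2 - pr) ->
  let P := qrat a b pr in let T := qrat a b th in
  let E00 := (al*P + be*qconj r)*qconj al + (al*r + be*P)*qconj be in
  let E01 := (al*P + be*qconj r)*qconj ga + (al*r + be*P)*qconj de in
  let E10 := (ga*P + de*qconj r)*qconj al + (ga*r + de*P)*qconj be in
  let E11 := (ga*P + de*qconj r)*qconj ga + (ga*r + de*P)*qconj de in
  [/\ E00 = T*P, E01 = T*r, E10 = T*qconj r & E11 = T*P] <->
  [/\ P * qnorm (P*al + qconj r * ga) + qnorm (P*(al*r + P*be) + qconj r*(ga*r+P*de))
      = T*(P*(P*P)),
      P * qnorm ga + qnorm (ga * r + P * de) = T*(P*P) &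
      P * al * qconj ga + (al * r + P * be) * qconj (ga * r + P * de) = - (T*P*qconj r)].
Proof.
move=> hp hr hK P T E00 E01 E10 E11.
have K0 : r * qconj r - qrat a b (pr^+2 - pr) = 0 by rewrite hK subrr.
have i1 := @I1 a b pr th r al be ga de hr; rewrite /= K0 in i1.
have i2 := @I2 a b pr th r al be ga de; rewrite /= K0 in i2.
have i3 := @I3 a b pr th r al be ga de hr; rewrite /= K0 in i3.
have i4 := @I4 a b pr th r al be ga de; rewrite /= in i4.
rewrite !(mulr0, mul0r, addr0, subr0) in i1 i2 i3.
have sub : forall x y : Q, x - y = 0 -> x = y.
  by move=> x y /eqP; rewrite subr_eq0 => /eqP.
have bus : forall x y : Q, x = y -> x - y = 0.
  by move=> x y ->; rewrite subrr.
split.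
- case=> /bus d00 /bus d01 /bus d10 /bus d11.
  split; apply: sub.
  + by rewrite i1 d00 d01 d10 d11 !(mulr0, mul0r, addr0).
  + by rewrite i2 d11 !(mulr0, mul0r, addr0).
  + by rewrite opprK i3 d01 !(mulr0, mul0r, addr0).
- case=> /bus h1 /bus h2 h3.
  have {}h3 : P * al * qconj ga + (al * r + P * be) * qconj (ga * r + P * de)
     + T * P * qconj r = 0 by rewrite h3 addNr.
  rewrite i3 in h3. rewrite i2 in h2. rewrite i1 in h1.
  have d11 : E11 - T * P = 0 by apply: (@qcanc a b pr _ hp).
  have d01 : E01 - T * r = 0 by apply: (@qcanc a b pr _ hp).
  have d10 : E10 - T * qconj r = 0 by rewrite i4 d01 qconj0.
  rewrite d11 d01 d10 !(mulr0, mul0r, addr0) in h1.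
  split; apply: sub => //.
  apply: (@qcanc a b pr _ hp); apply: (@qcanc a b pr _ hp); apply: (@qcanc a b pr _ hp).
  by rewrite !mulrA.
Qed.

End Core.


Lemma natq (a b : rat) (n : nat) : (n%:R : quat a b) = qrat a b n%:R.
Proof.
elim: n => [|n IH]; first by apply: qeq.
rewrite -!natr1 IH; apply: qeq => /=; ring.
Qed.

Lemma sum2 (V : nmodType) (F : 'I_2 -> V) : \sum_(i < 2) F i = F ord0 + F ord_max.
Proof. by rewrite big_ord_recl big_ord1; congr (_ + F _); apply: val_inj. Qed.

Lemma ord2 (i : 'I_2) : i = ord0 \/ i = ord_max.
Proof. by case: i => [[|[|?]] ?]; [left|right|]; try apply: val_inj. Qed.

Lemma mx2E (a b : rat) (M N : 'M[quat a b]_2) :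
  M = N <-> [/\ M ord0 ord0 = N ord0 ord0, M ord0 ord_max = N ord0 ord_max,
               M ord_max ord0 = N ord_max ord0 & M ord_max ord_max = N ord_max ord_max].
Proof.
split=> [->//|[h1 h2 h3 h4]]; apply/matrixP => i j.
by case: (ord2 i) => ->; case: (ord2 j) => ->.
Qed.

Lemma entryE (a b : rat) (nu M : 'M[quat a b]_2) i j :
  (nu *m M *m conjT nu) i j =
  (nu i ord0 * M ord0 ord0 + nu i ord_max * M ord_max ord0) * qconj (nu j ord0)
  + (nu i ord0 * M ord0 ord_max + nu i ord_max * M ord_max ord_max) * qconj (nu j ord_max).
Proof. by rewrite !mxE sum2 /conjT !mxE !sum2. Qed.

Theorem corollary5p7 (p : nat) (a b : int)
  (O : quat a%:~R b%:~R -> Prop) (lam mu : quat a%:~R b%:~R) (theta : rat) :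
  prime p ->
  ramified_exactly_p_infty a b p ->
  is_maximal_order O ->
  O lam -> O mu ->
  qnorm lam = (p.-1)%:R ->
  qnorm mu = p%:R ->
  qtr (lam * qconj mu) = 0 ->
  0 < theta ->
  let r := lam * qconj mu in
  let g := mx2 1 lam 0 mu in
  let A := g *m conjT g in
  forall nu : 'M[quat a%:~R b%:~R]_2,
    (in_M2O_units O nu /\ nu *m A *m conjT nu = qrat _ _ theta *: A)
    <->
    (in_M2O_units O nu /\
     let al := nu ord0 ord0 in let be := nu ord0 ord_max in
     let ga := nu ord_max ord0 in let de := nu ord_max ord_max in
     [/\ p%:R * qnorm (p%:R * al + qconj r * ga)
           + qnorm (p%:R * (al * r + p%:R * be) + qconj r * (ga * r + p%:R * de))
           = qrat _ _ theta * p%:R ^+ 3,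
         p%:R * qnorm ga + qnorm (ga * r + p%:R * de) = qrat _ _ theta * p%:R ^+ 2
       & p%:R * al * qconj ga + (al * r + p%:R * be) * qconj (ga * r + p%:R * de)
           = - (qrat _ _ theta * p%:R * qconj r)]).
Proof.
move=> hp hram hO hOl hOm Hlam Hmu Htr hth r g A nu.
pose pr : rat := p%:R.
have pgt0 := prime_gt0 hp.
have hpr : pr != 0 by rewrite /pr pnatr_eq0 -lt0n.
have hp1 : ((p.-1)%:R : rat) = pr - 1.
  by rewrite /pr -[in RHS](prednK pgt0) -addn1 natrD addrK.
have hr0 : q0 r = 0.
  move: Htr; rewrite /qtr => /(congr1 (@q0 _ _)) /= h; lra.
have hK : r * qconj r = qrat _ _ (pr^+2 - pr).
  rewrite /r.
  have -> : lam * qconj mu * qconj (lam * qconj mu) = lam * qnorm mu * qconj lam.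
    by rewrite /qnorm; apply: qeq => /=; ring.
  rewrite Hmu natq.
  have -> : lam * qrat _ _ p%:R * qconj lam = qrat _ _ p%:R * qnorm lam.
    by rewrite /qnorm; apply: qeq => /=; ring.
  rewrite Hlam natq hp1 /pr; apply: qeq => /=; ring.
have HA : A = mx2 (qrat _ _ pr) r (qconj r) (qrat _ _ pr).
  rewrite /A /g /conjT; apply/mx2E; rewrite !(mxE, sum2) /=.
  split.
  - have -> : 1 * qconj 1 + lam * qconj lam = 1 + qnorm lam.
      by rewrite /qnorm; apply: qeq => /=; ring.
    rewrite Hlam natq hp1; apply: qeq => /=; ring.
  - by rewrite /r; apply: qeq => /=; ring.
  - by rewrite /r; apply: qeq => /=; ring.
  - have -> : 0 * qconj 0 + mu * qconj mu = qnorm mu.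
      by rewrite /qnorm; apply: qeq => /=; ring.
    by rewrite Hmu natq.
rewrite HA.
suff H : (nu *m mx2 (qrat _ _ pr) r (qconj r) (qrat _ _ pr) *m conjT nu
          = qrat _ _ theta *: mx2 (qrat _ _ pr) r (qconj r) (qrat _ _ pr)) <->
  (let al := nu ord0 ord0 in let be := nu ord0 ord_max in
     let ga := nu ord_max ord0 in let de := nu ord_max ord_max in
     [/\ p%:R * qnorm (p%:R * al + qconj r * ga)
           + qnorm (p%:R * (al * r + p%:R * be) + qconj r * (ga * r + p%:R * de))
           = qrat _ _ theta * p%:R ^+ 3,
         p%:R * qnorm ga + qnorm (ga * r + p%:R * de) = qrat _ _ theta * p%:R ^+ 2
       & p%:R * al * qconj ga + (al * r + p%:R * be) * qconj (ga * r + p%:R * de)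
           = - (qrat _ _ theta * p%:R * qconj r)]).
  by split; case=> hU /H.
rewrite mx2E !entryE !mxE /= natq !exprS expr0 !mulr1.
exact: core.
Qed.
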